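(* Let $X,Y$ be finite sets with $\max\{|X|,|Y|\}\le N$, $c\in\mathbb R_+^{X\times Y}$, and $\mu=r/M\in\mathcal P(X)$, $\nu=s/M\in\mathcal P(Y)$ for a positive integer $M$ and $r\in\mathbb Z_{++}^X$, $s\in\mathbb Z_{++}^Y$. Let $\varepsilon_1>\varepsilon_2>0$ and let $(\alpha_a,\beta_a)$ be maximizers of $J_{\varepsilon_a}$, $a=1,2$. Run the asynchronous Sinkhorn iteration with parameter $\varepsilon=\varepsilon_2$ initialized with $v^{(0)}=\exp(\beta_1/\varepsilon_2)$. Then for every $q_{\mathrm{target}}\in(0,1)$ there exists $$n\le2+\frac{\varepsilon_1}{\varepsilon_2}\cdot\frac{N(4\log N+24\log M)+\log M}{1-q_{\mathrm{target}}}$$ with $q^{(n)}\ge q_{\mathrm{target}}$.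
   Context: For $\varepsilon>0$, $K_\varepsilon(x,y)=\exp(-c(x,y)/\varepsilon)\mu(x)\nu(y)$ and $J_\varepsilon(\alpha,\beta)=\langle\alpha,\mu\rangle+\langle\beta,\nu\rangle-\varepsilon\sum_{x,y}K_\varepsilon(x,y)(\exp((\alpha(x)+\beta(y))/\varepsilon)-1)$. Asynchronous Sinkhorn iteration with parameter $\varepsilon$ and kernel $K=K_\varepsilon$: given $v^{(0)}\in\mathbb R_{++}^Y$, for $\ell\ge0$: $u^{(\ell+1)}=\mu\oslash(Kv^{(\ell)})$, $\hat v^{(\ell+1)}=\nu\oslash(K^\top u^{(\ell+1)})$, $v^{(\ell+1)}=\min\{v^{(\ell)},\hat v^{(\ell+1)}\}$ componentwise, $\pi^{(\ell+1)}=\mathrm{diag}(u^{(\ell+1)})K\mathrm{diag}(v^{(\ell+1)})$, $q^{(\ell+1)}=\sum_{x,y}\pi^{(\ell+1)}(x,y)$; $\oslash$ is componentwise division. *)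

(* Defs.v *)
From mathcomp Require Import all_boot all_order all_algebra.
From mathcomp Require Import reals sequences exp.
Set Implicit Arguments. Unset Strict Implicit. Unset Printing Implicit Defensive.
Import Order.TTheory GRing.Theory Num.Theory.
Local Open Scope ring_scope.

Section Sinkhorn.
Variables (R : realType) (X Y : finType).

Definition Kmat (eps : R) (c : X -> Y -> R) (mu : X -> R) (nu : Y -> R)
  (x : X) (y : Y) : R := expR (- c x y / eps) * mu x * nu y.

Definition Jdual (eps : R) (c : X -> Y -> R) (mu : X -> R) (nu : Y -> R)
  (a : X -> R) (b : Y -> R) : R :=
  \sum_(x : X) a x * mu x + \sum_(y : Y) b y * nu y
  - eps * \sum_(x : X) \sum_(y : Y)
        Kmat eps c mu nu x y * (expR ((a x + b y) / eps) - 1).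

Definition is_Jmaximizer (eps : R) (c : X -> Y -> R) (mu : X -> R) (nu : Y -> R)
  (a : X -> R) (b : Y -> R) : Prop :=
  forall (a' : X -> R) (b' : Y -> R),
    Jdual eps c mu nu a' b' <= Jdual eps c mu nu a b.

Definition sk_u (K : X -> Y -> R) (mu : X -> R) (v : Y -> R) (x : X) : R :=
  mu x / \sum_(y : Y) K x y * v y.

Definition sk_vstep (K : X -> Y -> R) (mu : X -> R) (nu : Y -> R)
  (v : Y -> R) (y : Y) : R :=
  Num.min (v y) (nu y / \sum_(x : X) K x y * sk_u K mu v x).

Fixpoint sk_v (K : X -> Y -> R) (mu : X -> R) (nu : Y -> R) (v0 : Y -> R)
  (l : nat) : Y -> R :=
  match l with
  | 0 => v0
  | l'.+1 => sk_vstep K mu nu (sk_v K mu nu v0 l')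
  end.

(* q^(l+1) = sum_{x,y} u^(l+1)(x) K(x,y) v^(l+1)(y),
   with u^(l+1) = mu ./ (K v^(l)); q^(0) is not defined in the paper,
   we set it to 0 for totality (the theorem requires n >= 1). *)
Definition sk_q (K : X -> Y -> R) (mu : X -> R) (nu : Y -> R) (v0 : Y -> R)
  (n : nat) : R :=
  match n with
  | 0 => 0
  | l.+1 => \sum_(x : X) \sum_(y : Y)
              sk_u K mu (sk_v K mu nu v0 l) x * K x y * sk_v K mu nu v0 l.+1 y
  end.

End Sinkhorn.

(* Main.v *)
Require Import Defs.
From mathcomp Require Import all_boot all_order all_algebra.
From mathcomp Require Import reals sequences exp.
From mathcomp Require Import ring lra zify.
Import Order.TTheory GRing.Theory Num.Theory.
Local Open Scope ring_scope.

Set Implicit Arguments. Unset Strict Implicit.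

Section Aux.
Variable R : realType.

Lemma ln_sub_ge (a b : R) : 0 < a -> 0 < b -> 1 - b / a <= ln a - ln b.
Proof.
move=> ha hb.
have ea : expR (ln a) = a by rewrite lnK // posrE.
have eb : expR (ln b) = b by rewrite lnK // posrE.
have := expR_ge1Dx (ln b - ln a); rewrite expRB ea eb; lra.
Qed.

Lemma young (d t : R) : 0 < d -> d < 1 -> expR (d * t) <= d * expR t + (1 - d).
Proof.
move=> h0 h1.
have he := expR_gt0 t.
set m := _ + _.
have mpos : 0 < m by rewrite /m; nra.
have em : expR (ln m) = m by rewrite lnK // posrE.
have h2 := expR_ge1Dx (t - ln m); rewrite expRB em in h2.
have h3 := expR_ge1Dx (- ln m); rewrite expRN em in h3.
have h4 : d * (1 + (t - ln m)) + (1 - d) * (1 - ln m) <= d * (expR t / m) + (1 - d) * m^-1.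
  apply: lerD; apply: ler_wpM2l => //; lra.
have h5 : d * (expR t / m) + (1 - d) * m^-1 = 1.
  rewrite /m; field; rewrite -/m; exact: lt0r_neq0.
rewrite -em ler_expR; lra.
Qed.

Lemma foc_aux (eps m r : R) : 0 < eps -> 0 < m -> 0 < r ->
  (forall t, t * m - eps * (expR (t / eps) - 1) * r <= 0) -> m = r.
Proof.
move=> he hm hr H.
have em : expR (ln m) = m by rewrite lnK // posrE.
have er : expR (ln r) = r by rewrite lnK // posrE.
apply/eqP; apply: contraT => hne.
have hy : ln r - ln m != 0.
  apply: contra hne; rewrite subr_eq0 => /eqP h.
  by rewrite -em -er h.
have := H (- eps * (ln r - ln m)).
have -> : - eps * (ln r - ln m) / eps = ln m - ln r.
  by field; exact: lt0r_neq0.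
rewrite expRB em er.
have h1 := expR_gt1Dx hy; rewrite expRB em er in h1.
have -> : - eps * (ln r - ln m) * m - eps * (m / r - 1) * r
   = eps * m * (r / m - 1 - (ln r - ln m)).
  by field; apply/andP; split; exact: lt0r_neq0.
move=> h2.
have : 0 < eps * m * (r / m - 1 - (ln r - ln m)).
  apply: mulr_gt0; first exact: mulr_gt0.
  lra.
lra.
Qed.

End Aux.

Section Foc.
Variables (R : realType) (X Y : finType).

Lemma sum_pos (I : finType) (i0 : I) (f : I -> R) :
  (forall i, 0 < f i) -> 0 < \sum_i f i.
Proof.
move=> H; rewrite (bigD1 i0) //=.
have h1 := H i0.
have h2 : 0 <= \sum_(i | i != i0) f i by apply: sumr_ge0 => i _; exact: ltW.
lra.
Qed.

Lemma term_le_sum (I : finType) (P : pred I) (f : I -> R) i :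
  P i -> (forall j, P j -> 0 <= f j) -> f i <= \sum_(j | P j) f j.
Proof.
move=> Pi H; rewrite (bigD1 i) //=.
have h2 : 0 <= \sum_(j | P j && (j != i)) f j.
  by apply: sumr_ge0 => j /andP [Pj _]; exact: H.
lra.
Qed.

Definition Frow eps c (mu : X -> R) (nu : Y -> R) (b : Y -> R) (al : R) x :=
  al * mu x - eps * \sum_y Kmat eps c mu nu x y * (expR ((al + b y)/eps) - 1).
Definition Fcol eps c (mu : X -> R) (nu : Y -> R) (a : X -> R) (be : R) y :=
  be * nu y - eps * \sum_x Kmat eps c mu nu x y * (expR ((a x + be)/eps) - 1).

Lemma Jdual_rowE eps c (mu : X -> R) (nu : Y -> R) a b :
  Jdual eps c mu nu a b =
  \sum_x Frow eps c mu nu b (a x) x + \sum_y b y * nu y.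
Proof. rewrite /Jdual /Frow sumrB -mulr_sumr; ring. Qed.

Lemma Jdual_colE eps c (mu : X -> R) (nu : Y -> R) a b :
  Jdual eps c mu nu a b =
  \sum_y Fcol eps c mu nu a (b y) y + \sum_x a x * mu x.
Proof. rewrite /Jdual /Fcol sumrB -mulr_sumr (exchange_big _ _ _ (fun _ => true)) /=; ring. Qed.

Lemma foc_row eps c (mu : X -> R) (nu : Y -> R) a b (y0 : Y) :
  0 < eps -> (forall x, 0 < mu x) -> (forall y, 0 < nu y) ->
  is_Jmaximizer eps c mu nu a b ->
  forall x0, \sum_y nu y * expR ((a x0 + b y - c x0 y) / eps) = 1.
Proof.
move=> he hmu hnu H x0.
set r := \sum_y Kmat eps c mu nu x0 y * expR ((a x0 + b y)/eps).
have hr : r = mu x0 * \sum_y nu y * expR ((a x0 + b y - c x0 y) / eps).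
  rewrite /r mulr_sumr; apply: eq_bigr => y _; rewrite /Kmat.
  have -> : (a x0 + b y - c x0 y) / eps = - c x0 y / eps + (a x0 + b y) / eps.
    by field; exact: lt0r_neq0.
  rewrite expRD; ring.
have hspos : 0 < \sum_y nu y * expR ((a x0 + b y - c x0 y) / eps).
  apply: (@sum_pos _ y0 (fun y => nu y * expR ((a x0 + b y - c x0 y) / eps))) => y; apply: mulr_gt0 => //; exact: expR_gt0.
have rpos : 0 < r by rewrite hr; exact: mulr_gt0.
have key : forall t, t * mu x0 - eps * (expR (t / eps) - 1) * r <= 0.
  move=> t.
  have := H (fun x => a x + (if x == x0 then t else 0)) b.
  rewrite !Jdual_rowE (bigD1 x0) //= [in X in _ <= X](bigD1 x0) //= eqxx.
  under eq_bigr => x hx do rewrite (negbTE hx) addr0.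
  rewrite /Frow.
  have e1 : \sum_y Kmat eps c mu nu x0 y * (expR ((a x0 + t + b y) / eps) - 1)
     = expR (t / eps) * r - \sum_y Kmat eps c mu nu x0 y.
    rewrite /r mulr_sumr -sumrB; apply: eq_bigr => y _.
    have -> : (a x0 + t + b y) / eps = t / eps + (a x0 + b y) / eps.
      by field; exact: lt0r_neq0.
    rewrite expRD; ring.
  have e2 : \sum_y Kmat eps c mu nu x0 y * (expR ((a x0 + b y) / eps) - 1)
     = r - \sum_y Kmat eps c mu nu x0 y.
    by rewrite /r -sumrB; apply: eq_bigr => y _; ring.
  rewrite e1 e2; lra.
have := @foc_aux R _ _ _ he (hmu x0) rpos key.
rewrite hr => h.
have hm := hmu x0.
have : mu x0 * (\sum_y nu y * expR ((a x0 + b y - c x0 y) / eps) - 1) = 0.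
  by rewrite mulrBr mulr1 -h subrr.
move/eqP; rewrite mulf_eq0 (negbTE (lt0r_neq0 hm)) /= subr_eq0 => /eqP //.
Qed.

Lemma foc_col eps c (mu : X -> R) (nu : Y -> R) a b (x1 : X) :
  0 < eps -> (forall x, 0 < mu x) -> (forall y, 0 < nu y) ->
  is_Jmaximizer eps c mu nu a b ->
  forall y0, \sum_x mu x * expR ((a x + b y0 - c x y0) / eps) = 1.
Proof.
move=> he hmu hnu H y0.
set r := \sum_x Kmat eps c mu nu x y0 * expR ((a x + b y0)/eps).
have hr : r = nu y0 * \sum_x mu x * expR ((a x + b y0 - c x y0) / eps).
  rewrite /r mulr_sumr; apply: eq_bigr => x _; rewrite /Kmat.
  have -> : (a x + b y0 - c x y0) / eps = - c x y0 / eps + (a x + b y0) / eps.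
    by field; exact: lt0r_neq0.
  rewrite expRD; ring.
have hspos : 0 < \sum_x mu x * expR ((a x + b y0 - c x y0) / eps).
  apply: (@sum_pos _ x1 (fun x => mu x * expR ((a x + b y0 - c x y0) / eps))) => x; apply: mulr_gt0 => //; exact: expR_gt0.
have rpos : 0 < r by rewrite hr; exact: mulr_gt0.
have key : forall t, t * nu y0 - eps * (expR (t / eps) - 1) * r <= 0.
  move=> t.
  have := H a (fun y => b y + (if y == y0 then t else 0)).
  rewrite !Jdual_colE (bigD1 y0) //= [in X in _ <= X](bigD1 y0) //= eqxx.
  under eq_bigr => y hy do rewrite (negbTE hy) addr0.
  rewrite /Fcol.
  have e1 : \sum_x Kmat eps c mu nu x y0 * (expR ((a x + (b y0 + t)) / eps) - 1)
     = expR (t / eps) * r - \sum_x Kmat eps c mu nu x y0.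
    rewrite /r mulr_sumr -sumrB; apply: eq_bigr => x _.
    have -> : (a x + (b y0 + t)) / eps = t / eps + (a x + b y0) / eps.
      by field; exact: lt0r_neq0.
    rewrite expRD; ring.
  have e2 : \sum_x Kmat eps c mu nu x y0 * (expR ((a x + b y0) / eps) - 1)
     = r - \sum_x Kmat eps c mu nu x y0.
    by rewrite /r -sumrB; apply: eq_bigr => x _; ring.
  rewrite e1 e2; lra.
have := @foc_aux R _ _ _ he (hnu y0) rpos key.
rewrite hr => h.
have hm := hnu y0.
have : nu y0 * (\sum_x mu x * expR ((a x + b y0 - c x y0) / eps) - 1) = 0.
  by rewrite mulrBr mulr1 -h subrr.
move/eqP; rewrite mulf_eq0 (negbTE (lt0r_neq0 hm)) /= subr_eq0 => /eqP //.
Qed.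

Lemma JdualE eps c (mu : X -> R) (nu : Y -> R) a b : eps != 0 ->
  Jdual eps c mu nu a b = \sum_x a x * mu x + \sum_y b y * nu y
  - eps * (\sum_x \sum_y mu x * nu y * expR ((a x + b y - c x y) / eps)
           - \sum_x \sum_y Kmat eps c mu nu x y).
Proof.
move=> he; rewrite /Jdual; congr (_ - eps * _).
rewrite -sumrB; apply: eq_bigr => x _; rewrite -sumrB; apply: eq_bigr => y _.
rewrite /Kmat.
have -> : (a x + b y - c x y) / eps = - c x y / eps + (a x + b y) / eps.
  by field.
rewrite expRD; ring.
Qed.

Lemma flow_id (P : X -> Y -> R) (A : pred X) (B : pred Y) (mu : X -> R) (nu : Y -> R) :
  (forall x, \sum_y P x y = mu x) -> (forall y, \sum_x P x y = nu y) ->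
  \sum_(x | A x) \sum_(y | B y) P x y - \sum_(x | ~~ A x) \sum_(y | ~~ B y) P x y
  = \sum_(y | B y) nu y - \sum_(x | ~~ A x) mu x.
Proof.
move=> hrow hcol.
have e1 : \sum_(y | B y) nu y = \sum_(x | A x) \sum_(y | B y) P x y
    + \sum_(x | ~~ A x) \sum_(y | B y) P x y.
  transitivity (\sum_(y | B y) \sum_x P x y).
    by apply: eq_bigr => y _; rewrite hcol.
  by rewrite exchange_big /= (bigID A) /=.
have e2 : \sum_(x | ~~ A x) mu x = \sum_(x | ~~ A x) \sum_(y | B y) P x y
    + \sum_(x | ~~ A x) \sum_(y | ~~ B y) P x y.
  by rewrite -big_split; apply: eq_bigr => x _; rewrite -hrow (bigID B).
rewrite e1 e2; ring.
Qed.

End Foc.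

Lemma pigeon (R : realType) (I : finType) (P : pred I) (f : I -> R) (F K : R) :
  0 < F -> 0 < K -> #|I|%:R <= K -> F <= \sum_(i | P i) f i ->
  exists i, P i /\ F / K <= f i.
Proof.
move=> hF hK hI hs.
case: (boolP [exists i, P i && (F / K <= f i)]) => [/existsP [i /andP [Pi hi]] | /existsPn hn].
  by exists i.
exfalso.
have hFK : 0 < F / K by exact: divr_gt0.
case: (pickP (fun _ : I => true)) => [i0 _ | h0]; last first.
  move: hs; rewrite big_pred0; first by move=> h; lra.
  by move=> i; have := h0 i.
have hlt : \sum_(i | P i) f i < \sum_(i : I) (F / K).
  rewrite big_mkcond /=; apply: ltr_sum.
    by apply/hasP; exists i0 => //; rewrite mem_index_enum.
  move=> i _; case: ifP => Pi //.
  by have := hn i; rewrite Pi /= -ltNge.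
move: hlt; rewrite sumr_const -mulr_natl.
have : #|I|%:R * (F / K) <= K * (F / K) by apply: ler_wpM2r => //; exact: ltW.
have -> : K * (F / K) = F by field; exact: lt0r_neq0.
lra.
Qed.

Section Main.
Variables (R : realType) (X Y : finType) (N M : nat)
  (c : X -> Y -> R) (r : X -> nat) (s : Y -> nat)
  (mu : X -> R) (nu : Y -> R)
  (E ep : R) (al1 : X -> R) (be1 : Y -> R) (al2 : X -> R) (be2 : Y -> R).
Hypotheses (hXN : (#|X| <= N)%N) (hYN : (#|Y| <= N)%N) (hM : (0 < M)%N)
  (hr : forall x, (0 < r x)%N) (hs : forall y, (0 < s y)%N)
  (hmuE : forall x, mu x = (r x)%:R / M%:R) (hnuE : forall y, nu y = (s y)%:R / M%:R)
  (hsmu : \sum_(x : X) mu x = 1) (hsnu : \sum_(y : Y) nu y = 1)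
  (hep : 0 < ep) (hepE : ep < E)
  (opt1 : is_Jmaximizer E c mu nu al1 be1)
  (opt2 : is_Jmaximizer ep c mu nu al2 be2).
Variables (x1 : X) (y1 : Y).

Lemma Mpos : 0 < M%:R :> R.
Proof. by rewrite ltr0n. Qed.

Lemma mu_ge x : M%:R^-1 <= mu x.
Proof.
rewrite hmuE ler_pdivlMr ?Mpos // mulVf ?lt0r_neq0 ?Mpos //.
by rewrite ler1n.
Qed.
Lemma nu_ge y : M%:R^-1 <= nu y.
Proof.
rewrite hnuE ler_pdivlMr ?Mpos // mulVf ?lt0r_neq0 ?Mpos //.
by rewrite ler1n.
Qed.
Lemma mu_pos x : 0 < mu x.
Proof. apply: lt_le_trans (mu_ge x); by rewrite invr_gt0 Mpos. Qed.
Lemma nu_pos y : 0 < nu y.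
Proof. apply: lt_le_trans (nu_ge y); by rewrite invr_gt0 Mpos. Qed.

Definition LM : R := ln M%:R.
Definition LN : R := ln N%:R.
Lemma expLM : expR LM = M%:R.
Proof. by rewrite /LM lnK // posrE Mpos. Qed.
Lemma LM_ge0 : 0 <= LM.
Proof. by apply: ln_ge0; rewrite ler1n. Qed.
Lemma Npos : (0 < N)%N.
Proof.
apply: leq_trans hXN; apply/card_gt0P; by exists x1.
Qed.
Lemma LN_ge0 : 0 <= LN.
Proof. by apply: ln_ge0; rewrite ler1n Npos. Qed.
Lemma expNLM : expR (- LM) = M%:R^-1.
Proof. by rewrite expRN expLM. Qed.

Lemma Epos : 0 < E.
Proof. exact: lt_trans hepE. Qed.

Definition S1 x y := (al1 x + be1 y - c x y) / E.
Definition S2 x y := (al2 x + be2 y - c x y) / ep.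

Lemma row1 x : \sum_y nu y * expR (S1 x y) = 1.
Proof. exact: (foc_row y1 Epos mu_pos nu_pos opt1). Qed.
Lemma col1 y : \sum_x mu x * expR (S1 x y) = 1.
Proof. exact: (foc_col x1 Epos mu_pos nu_pos opt1). Qed.
Lemma row2 x : \sum_y nu y * expR (S2 x y) = 1.
Proof. exact: (foc_row y1 hep mu_pos nu_pos opt2). Qed.
Lemma col2 y : \sum_x mu x * expR (S2 x y) = 1.
Proof. exact: (foc_col x1 hep mu_pos nu_pos opt2). Qed.

Lemma le_LM_nu y z : nu y * expR z <= 1 -> z <= LM.
Proof.
move=> h; rewrite -ler_expR expLM.
have h1 := nu_ge y; have h2 := nu_pos y; have h3 := expR_gt0 z.
have hM' := Mpos.
have : M%:R^-1 * expR z <= 1 by apply: le_trans h; apply: ler_wpM2r => //; exact: ltW.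
rewrite -ler_pdivlMl ?invr_gt0 // invrK mulr1 //.
Qed.

Lemma S1_le x y : S1 x y <= LM.
Proof.
apply: (@le_LM_nu y); rewrite -(row1 x).
apply: (term_le_sum (P := fun _ => true) (f := fun y => nu y * expR (S1 x y))) => // j _.
by apply: mulr_ge0; [exact: ltW (nu_pos j)| exact: ltW (expR_gt0 _)].
Qed.
Lemma S2_le x y : S2 x y <= LM.
Proof.
apply: (@le_LM_nu y); rewrite -(row2 x).
apply: (term_le_sum (P := fun _ => true) (f := fun y => nu y * expR (S2 x y))) => // j _.
by apply: mulr_ge0; [exact: ltW (nu_pos j)| exact: ltW (expR_gt0 _)].
Qed.

Definition dl := ep / E.
Definition ee x := (al2 x - al1 x) / E.
Definition dd y := (be2 y - be1 y) / E.
Lemma dl_pos : 0 < dl.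
Proof. by rewrite /dl divr_gt0 // Epos. Qed.
Lemma dl_lt1 : dl < 1.
Proof. by rewrite /dl ltr_pdivrMr ?Epos // mul1r. Qed.
Lemma Ene0 : E != 0. Proof. exact: lt0r_neq0 Epos. Qed.
Lemma epne0 : ep != 0. Proof. exact: lt0r_neq0 hep. Qed.

Lemma keyid x y : dl * S2 x y = S1 x y + ee x + dd y.
Proof. rewrite /dl /S2 /S1 /ee /dd; field; by rewrite Ene0 epne0. Qed.

Lemma ge0_P (x : X) (y : Y) z : 0 <= mu x * nu y * expR z.
Proof.
apply: mulr_ge0; last exact: ltW (expR_gt0 _).
apply: mulr_ge0; [exact: ltW (mu_pos _) | exact: ltW (nu_pos _)].
Qed.

Lemma munu_sum (A : pred X) (B : pred Y) :
  \sum_(x | A x) \sum_(y | B y) mu x * nu y = (\sum_(x | A x) mu x) * (\sum_(y | B y) nu y).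
Proof. by rewrite mulr_suml; apply: eq_bigr => x _; rewrite mulr_sumr. Qed.

Lemma sum_mu_le1 (A : pred X) : \sum_(x | A x) mu x <= 1.
Proof.
rewrite -hsmu [X in _ <= X](bigID A) /=.
have : 0 <= \sum_(x | ~~ A x) mu x by apply: sumr_ge0 => x _; exact: ltW (mu_pos x).
lra.
Qed.
Lemma sum_nu_lt1 (B : pred Y) y : ~~ B y -> \sum_(y | B y) nu y < 1.
Proof.
move=> hy; rewrite -hsnu [X in _ < X](bigID B) /=.
have : nu y <= \sum_(y | ~~ B y) nu y.
  by apply: (term_le_sum (P := fun y => ~~ B y)) => // j _; exact: ltW (nu_pos j).
have := nu_pos y; lra.
Qed.
Lemma sum_ge0_mu (A : pred X) : 0 <= \sum_(x | A x) mu x.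
Proof. by apply: sumr_ge0 => x _; exact: ltW (mu_pos x). Qed.
Lemma sum_ge0_nu (B : pred Y) : 0 <= \sum_(y | B y) nu y.
Proof. by apply: sumr_ge0 => x _; exact: ltW (nu_pos x). Qed.

Lemma avg : \sum_x mu x * ee x + \sum_y nu y * dd y <= 0.
Proof.
have h := opt1 al2 be2.
rewrite !(JdualE _ _ _ _ _ Ene0) in h.
have v1 : \sum_x \sum_y mu x * nu y * expR ((al1 x + be1 y - c x y) / E) = 1.
  rewrite -hsmu; apply: eq_bigr => x _.
  by rewrite -[RHS]mulr1 -(row1 x) mulr_sumr; apply: eq_bigr => y _; rewrite /S1 mulrA.
have w1 : \sum_x \sum_y mu x * nu y = 1.
  by rewrite (munu_sum predT predT) hsmu hsnu mulr1.
have v2 : \sum_x \sum_y mu x * nu y * expR ((al2 x + be2 y - c x y) / E) <= 1.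
  have d0 := dl_pos; have d1 := dl_lt1.
  have -> : 1 = dl * (\sum_x \sum_y mu x * nu y * expR (S2 x y))
             + (1 - dl) * \sum_x \sum_y mu x * nu y.
    have -> : \sum_x \sum_y mu x * nu y * expR (S2 x y) = 1.
      rewrite -hsmu; apply: eq_bigr => x _.
      by rewrite -[RHS]mulr1 -(row2 x) mulr_sumr; apply: eq_bigr => y _; rewrite mulrA.
    by rewrite w1; ring.
  rewrite !mulr_sumr -big_split /=; apply: ler_sum => x _.
  rewrite !mulr_sumr -big_split /=; apply: ler_sum => y _.
  have -> : (al2 x + be2 y - c x y) / E = dl * S2 x y.
    by rewrite /dl /S2; field; by rewrite Ene0 epne0.
  have hy := young (S2 x y) d0 d1.
  have hw : 0 <= mu x * nu y by apply: mulr_ge0; [exact: ltW (mu_pos _) | exact: ltW (nu_pos _)].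
  have := ler_wpM2l hw hy.
  move=> hh; apply: (le_trans hh); rewrite le_eqVlt; apply/orP; left; apply/eqP; ring.
have ea : \sum_x mu x * ee x = (\sum_x al2 x * mu x - \sum_x al1 x * mu x) / E.
  rewrite -sumrB mulr_suml; apply: eq_bigr => x _; rewrite /ee; field; exact: Ene0.
have eb : \sum_y nu y * dd y = (\sum_y be2 y * nu y - \sum_y be1 y * nu y) / E.
  rewrite -sumrB mulr_suml; apply: eq_bigr => x _; rewrite /dd; field; exact: Ene0.
rewrite ea eb -mulrDl.
have hE := Epos.
rewrite pmulr_lle0 ?invr_gt0 //.
rewrite v1 in h.
have : E * (\sum_x \sum_y mu x * nu y * expR ((al2 x + be2 y - c x y) / E) - 1) <= 0.
  by nra.
lra.
Qed.

Definition G := 4 * LM + 2 * LN.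
Definition P1 x y := mu x * nu y * expR (S1 x y).
Definition P2 x y := mu x * nu y * expR (S2 x y).

Lemma P1row x : \sum_y P1 x y = mu x.
Proof. by rewrite -[RHS]mulr1 -(row1 x) mulr_sumr; apply: eq_bigr => y _; rewrite /P1 mulrA. Qed.
Lemma P2row x : \sum_y P2 x y = mu x.
Proof. by rewrite -[RHS]mulr1 -(row2 x) mulr_sumr; apply: eq_bigr => y _; rewrite /P2 mulrA. Qed.
Lemma P1col y : \sum_x P1 x y = nu y.
Proof.
rewrite -[RHS]mulr1 -(col1 y) mulr_sumr; apply: eq_bigr => x _; rewrite /P1; ring.
Qed.
Lemma P2col y : \sum_x P2 x y = nu y.
Proof.
rewrite -[RHS]mulr1 -(col2 y) mulr_sumr; apply: eq_bigr => x _; rewrite /P2; ring.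
Qed.

Lemma bnd_small (A : pred X) (B : pred Y) (S : X -> Y -> R) y' :
  ~~ B y' -> (forall x y, A x -> B y -> S x y <= - LM) ->
  \sum_(x | A x) \sum_(y | B y) mu x * nu y * expR (S x y) < M%:R^-1.
Proof.
move=> hy hS.
have h1 : \sum_(x | A x) \sum_(y | B y) mu x * nu y * expR (S x y)
   <= M%:R^-1 * ((\sum_(x | A x) mu x) * (\sum_(y | B y) nu y)).
  rewrite -munu_sum mulr_sumr; apply: ler_sum => x Ax.
  rewrite mulr_sumr; apply: ler_sum => y By.
  rewrite -expNLM mulrC; apply: ler_wpM2r.
    by apply: mulr_ge0; [exact: ltW (mu_pos _) | exact: ltW (nu_pos _)].
  by rewrite ler_expR; exact: hS.
have h2 := sum_mu_le1 A; have h3 := sum_nu_lt1 hy.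
have h4 := sum_ge0_mu A; have h5 := sum_ge0_nu B.
have hMi : 0 < M%:R^-1 :> R by rewrite invr_gt0 Mpos.
have : (\sum_(x | A x) mu x) * (\sum_(y | B y) nu y) < 1 by nra.
move=> h6; apply: (le_lt_trans h1).
by rewrite -[X in _ < X]mulr1 ltr_pM2l.
Qed.

Lemma gap a : (exists y, dd y <= a) -> (exists y, a + G < dd y) ->
  (forall y, dd y <= a \/ a + G < dd y) -> False.
Proof.
move=> [yl hyl] [yh hyh] hall.
set m := a + G / 2.
pose A : pred X := fun x => 0 <= ee x + m.
pose B : pred Y := fun y => a + G < dd y.
have LM0 := LM_ge0; have LN0 := LN_ge0; have d0 := dl_pos; have d1 := dl_lt1.
have G0 : 0 <= G by rewrite /G; lra.
have fa : forall x y, A x -> B y -> S1 x y + G / 2 < dl * S2 x y.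
  move=> x y; rewrite /A /B => Ax By; rewrite keyid; rewrite /m in Ax; lra.
have fa' : forall x y, A x -> B y -> S1 x y <= - LM.
  move=> x y Ax By; have h := fa x y Ax By; have h2 := S2_le x y.
  have h3 : dl * S2 x y <= dl * LM by rewrite ler_pM2l.
  have h4 : dl * LM <= LM by nra.
  rewrite /G in h; lra.
have hnB : forall y, ~~ B y -> dd y <= a.
  move=> y; rewrite /B => hb; case: (hall y) => // h; by rewrite h in hb.
have fb : forall x y, ~~ A x -> ~~ B y -> dl * S2 x y < S1 x y - G / 2.
  move=> x y Ax By; have h := hnB y By; move: Ax; rewrite /A -ltNge => Ax.
  rewrite keyid; rewrite /m in Ax; lra.
have fb' : forall x y, ~~ A x -> ~~ B y -> S2 x y <= - LM.
  move=> x y Ax By; have h := fb x y Ax By; have h2 := S1_le x y.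
  rewrite leNgt; apply/negP => h3.
  have h4 : dl * (- LM) <= dl * S2 x y by rewrite ler_pM2l //; exact: ltW.
  rewrite /G in h; nra.
have hBh : B yh by [].
have hBl : ~~ B yl by rewrite /B -leNgt; lra.
have F1 := flow_id A B P1row P1col.
have F2 := flow_id A B P2row P2col.
have bnd1 : \sum_(x | A x) \sum_(y | B y) P1 x y < M%:R^-1.
  exact: (bnd_small hBl fa').
have bnd2 : \sum_(x | ~~ A x) \sum_(y | ~~ B y) P2 x y < M%:R^-1.
  by apply: (bnd_small (y' := yh)) => //; rewrite negbK.
have s0 : forall (P : X -> Y -> R) (A' : pred X) (B' : pred Y),
    (forall x y, 0 <= P x y) -> 0 <= \sum_(x | A' x) \sum_(y | B' y) P x y.
  by move=> P A' B' hP; apply: sumr_ge0 => x _; apply: sumr_ge0 => y _.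
have p1 : 0 <= \sum_(x | ~~ A x) \sum_(y | ~~ B y) P1 x y by apply: s0 => x y; exact: ge0_P.
have p2 : 0 <= \sum_(x | A x) \sum_(y | B y) P2 x y by apply: s0 => x y; exact: ge0_P.
set D := \sum_(y | B y) nu y - \sum_(x | ~~ A x) mu x.
have hMp := Mpos.
have {}F1 : \sum_(x | A x) \sum_(y | B y) P1 x y -
    \sum_(x | ~~ A x) \sum_(y | ~~ B y) P1 x y = D by rewrite F1.
have {}F2 : \sum_(x | A x) \sum_(y | B y) P2 x y -
    \sum_(x | ~~ A x) \sum_(y | ~~ B y) P2 x y = D by rewrite F2.
have hD : D * M%:R = (\sum_(y | B y) s y)%:R - (\sum_(x | ~~ A x) r x)%:R.
  rewrite /D mulrBl !natr_sum !mulr_suml; congr (_ - _); apply: eq_bigr => z _.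
    by rewrite hnuE; field; rewrite lt0r_neq0.
  by rewrite hmuE; field; rewrite lt0r_neq0.
case: (ltngtP (\sum_(y | B y) s y) (\sum_(x | ~~ A x) r x)) => hn.
- have : D * M%:R <= -1.
    rewrite hD; have : ((\sum_(y | B y) s y).+1)%:R <= (\sum_(x | ~~ A x) r x)%:R :> R.
      by rewrite ler_nat.
    rewrite -natr1; lra.
  rewrite -ler_pdivlMr // => hD'.
  have : M%:R^-1 <= \sum_(x | ~~ A x) \sum_(y | ~~ B y) P2 x y.
    have -> : M%:R^-1 = - (-1 / M%:R) :> R by rewrite mulN1r opprK.
    lra.
  lra.
- have : 1 <= D * M%:R.
    rewrite hD; have : ((\sum_(x | ~~ A x) r x).+1)%:R <= (\sum_(y | B y) s y)%:R :> R.
      by rewrite ler_nat.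
    rewrite -natr1; lra.
  rewrite -ler_pdivrMr // mul1r => hD'.
  lra.
have D0 : D = 0.
  have : D * M%:R = 0 by rewrite hD hn subrr.
  by move/eqP; rewrite mulf_eq0 (negbTE (lt0r_neq0 hMp)) orbF => /eqP.
rewrite D0 in F1 F2.
have hF1 : \sum_(x | ~~ A x) \sum_(y | ~~ B y) P1 x y = \sum_(x | A x) \sum_(y | B y) P1 x y by lra.
set F := \sum_(x | A x) \sum_(y | B y) P1 x y.
have hF2 : \sum_(x | A x) \sum_(y | B y) P2 x y = \sum_(x | ~~ A x) \sum_(y | ~~ B y) P2 x y by lra.
have tl : forall (P : X -> Y -> R) (A' : pred X) (B' : pred Y) x y,
    (forall x y, 0 <= P x y) -> A' x -> B' y ->
    P x y <= \sum_(x | A' x) \sum_(y | B' y) P x y.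
  move=> P A' B' x y hP Ax By.
  apply: le_trans (_ : \sum_(y | B' y) P x y <= _).
    by apply: (term_le_sum (P := B') (f := P x)).
  apply: (term_le_sum (P := A') (f := fun x => \sum_(y | B' y) P x y)) => // j _.
  by apply: sumr_ge0.
have P1pos : forall x y, 0 < P1 x y.
  move=> x y; apply: mulr_gt0; last exact: expR_gt0.
  by apply: mulr_gt0; [exact: mu_pos | exact: nu_pos].
have P1ge0 : forall x y, 0 <= P1 x y by move=> x y; exact: ltW.
have P2ge0 : forall x y, 0 <= P2 x y by move=> x y; exact: ge0_P.
have Fpos : 0 < F.
  case Ax1: (A x1).
    have := tl P1 A B x1 yh P1ge0 Ax1 hBh; have := P1pos x1 yh; rewrite -/F; lra.
  have := tl P1 (fun x => ~~ A x) (fun y => ~~ B y) x1 yl P1ge0; rewrite Ax1 hF1.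
  move=> /(_ isT hBl); have := P1pos x1 yl; rewrite /F; lra.
have hN : 0 < N%:R :> R by rewrite ltr0n Npos.
have hXN' : #|X|%:R <= N%:R :> R by rewrite ler_nat.
have hYN' : #|Y|%:R <= N%:R :> R by rewrite ler_nat.
have [x0 [Ax0 hx0]] := pigeon (P := A) (f := fun x => \sum_(y | B y) P1 x y)
   Fpos hN hXN' (le_refl F).
have [y0 [By0 hy0]] := pigeon (P := B) (f := fun y => P1 x0 y)
   (divr_gt0 Fpos hN) hN hYN' hx0.
have eF : expR (ln F) = F by rewrite lnK // posrE.
set f := ln F in eF.
have hmu1 : forall x, mu x <= 1.
  move=> x; rewrite -hsmu.
  by apply: (term_le_sum (P := fun _ => true) (f := mu)) => // j _; exact: ltW (mu_pos j).
have hnu1 : forall y, nu y <= 1.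
  move=> y; rewrite -hsnu.
  by apply: (term_le_sum (P := fun _ => true) (f := nu)) => // j _; exact: ltW (nu_pos j).
have w0pos : 0 < mu x0 * nu y0 by apply: mulr_gt0; [exact: mu_pos | exact: nu_pos].
have ew : expR (ln (mu x0 * nu y0)) = mu x0 * nu y0 by rewrite lnK // posrE.
set lw := ln (mu x0 * nu y0) in ew.
have lw0 : lw <= 0.
  rewrite /lw; apply: ln_le0.
  have := hmu1 x0; have := hnu1 y0; have := mu_pos x0; have := nu_pos y0; nra.
have eN : expR LN = N%:R by rewrite /LN lnK // posrE.
have h_a : f - 2 * LN <= lw + S1 x0 y0.
  rewrite -ler_expR.
  have -> : expR (f - 2 * LN) = F / N%:R / N%:R.
    by rewrite -eF -eN -!expRB; congr expR; ring.
  by rewrite expRD ew; move: hy0; rewrite /P1.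
have h_b : expR (lw + S2 x0 y0) <= \sum_(x | A x) \sum_(y | B y) P2 x y.
  by rewrite expRD ew; exact: (tl P2 A B x0 y0 P2ge0 Ax0 By0).
have eM : expR LM = M%:R := expLM.
have h_c : forall x y, ~~ A x -> ~~ B y -> S1 x y <= f + 2 * LM.
  move=> x y Ax By.
  have h1 := tl P1 (fun x => ~~ A x) (fun y => ~~ B y) x y P1ge0 Ax By.
  rewrite hF1 -/F /P1 in h1.
  have hmn : M%:R^-1 * M%:R^-1 <= mu x * nu y.
    apply: ler_pM; [by rewrite invr_ge0 ltW | by rewrite invr_ge0 ltW | exact: mu_ge | exact: nu_ge].
  have h2 : M%:R^-1 * M%:R^-1 * expR (S1 x y) <= F.
    apply: le_trans h1; apply: ler_wpM2r => //; exact: ltW (expR_gt0 _).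
  rewrite -ler_expR.
  have -> : expR (f + 2 * LM) = M%:R * M%:R * F.
    by rewrite -eF -eM -!expRD; congr expR; ring.
  have -> : expR (S1 x y) = M%:R * M%:R * (M%:R^-1 * M%:R^-1 * expR (S1 x y)).
    by field; rewrite lt0r_neq0.
  by apply: ler_wpM2l => //; apply: mulr_ge0; exact: ltW.
set K0 := ((1 - dl) * (f + 2 * LM) - G / 2) / dl.
have dne0 : dl != 0 by exact: lt0r_neq0.
have h_d : forall x y, ~~ A x -> ~~ B y -> S2 x y <= S1 x y + K0.
  move=> x y Ax By.
  have h1 := fb x y Ax By; have h2 := h_c x y Ax By.
  rewrite -(ler_pM2l d0).
  have -> : dl * (S1 x y + K0) = dl * S1 x y + (1 - dl) * (f + 2 * LM) - G / 2.
    by rewrite /K0; field.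
  have : (1 - dl) * S1 x y <= (1 - dl) * (f + 2 * LM) by apply: ler_wpM2l => //; lra.
  lra.
have h_e : \sum_(x | ~~ A x) \sum_(y | ~~ B y) P2 x y <= expR (K0 + f).
  apply: le_trans (_ : \sum_(x | ~~ A x) \sum_(y | ~~ B y) (expR K0 * P1 x y) <= _).
    apply: ler_sum => x Ax; apply: ler_sum => y By.
    rewrite /P2 /P1 mulrCA; apply: ler_wpM2l.
      by apply: mulr_ge0; [exact: ltW (mu_pos _) | exact: ltW (nu_pos _)].
    by rewrite -expRD ler_expR addrC; exact: h_d.
  rewrite expRD eF.
  have -> : \sum_(x | ~~ A x) \sum_(y | ~~ B y) expR K0 * P1 x y
     = expR K0 * \sum_(x | ~~ A x) \sum_(y | ~~ B y) P1 x y.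
    by rewrite mulr_sumr; apply: eq_bigr => x _; rewrite mulr_sumr.
  by rewrite hF1.
have h_f : lw + S2 x0 y0 <= K0 + f.
  rewrite -ler_expR; apply: le_trans h_b _; rewrite hF2; exact: h_e.
have h_g : dl * (lw + S2 x0 y0) <= dl * (K0 + f) by rewrite ler_pM2l.
have e_g : dl * (K0 + f) = (1 - dl) * (f + 2 * LM) - G / 2 + dl * f.
  by rewrite /K0; field.
rewrite e_g in h_g.
have h_h := fa x0 y0 Ax0 By0.
have h_i : (1 - dl) * lw <= 0 by nra.
have h_j : 0 <= dl * LM by nra.
rewrite /G in h_h h_g; nra.
Qed.

Lemma G_ge0 : 0 <= G.
Proof. have := LM_ge0; have := LN_ge0; rewrite /G; lra. Qed.

Lemma osc y y0 : dd y - dd y0 <= (#|Y|.-1)%:R * G.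
Proof.
have G0 := G_ge0.
have claim : forall k : nat, (forall y, dd y <= dd y0 + k%:R * G) \/
    (k.+1 <= #|[set y | (dd y <= dd y0 + k%:R * G)%R]|)%N.
  elim=> [|k IH].
    right; rewrite mul0r addr0; apply/card_gt0P; exists y0; by rewrite inE.
  have ea : dd y0 + k.+1%:R * G = (dd y0 + k%:R * G) + G.
    by rewrite -natr1; ring.
  rewrite ea.
  have hk : 0 <= k%:R * G by apply: mulr_ge0.
  case: IH => [hall | hcnt].
    left => y'; have := hall y'; lra.
  case: (boolP [forall y', dd y' <= dd y0 + k%:R * G]) => [/forallP hall | /forallPn [yh hyh]].
    left => y'; have := hall y'; lra.
  rewrite -ltNge in hyh.
  case: (boolP [exists y', (dd y0 + k%:R * G < dd y') && (dd y' <= dd y0 + k%:R * G + G)])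
     => [/existsP [ym /andP [h1 h2]] | /existsPn hnone].
    right.
    have hsub : [set y | dd y <= dd y0 + k%:R * G] \proper [set y | dd y <= dd y0 + k%:R * G + G].
      apply/properP; split.
        by apply/subsetP => z; rewrite !inE => hz; lra.
      by exists ym; rewrite !inE // -ltNge.
    have := proper_card hsub => h; exact: leq_ltn_trans hcnt h.
  exfalso; apply: (gap (a := dd y0 + k%:R * G)).
  - by exists y0; lra.
  - exists yh; have := hnone yh; rewrite negb_and -!ltNge hyh /=; lra.
  - move=> y'; have := hnone y'; rewrite negb_and -!ltNge.
    case: (leP (dd y') (dd y0 + k%:R * G)) => h /=; first by left.
    by move=> h'; right.
case: (claim (#|Y|.-1)) => [h | h]; first by have := h y; lra.
case: (boolP (y \in [set y | dd y <= dd y0 + (#|Y|.-1)%:R * G])) => [|hy].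
  by rewrite inE; lra.
exfalso.
have h1 := cardsC [set y | dd y <= dd y0 + (#|Y|.-1)%:R * G].
have h2 : (0 < #|~: [set y | (dd y <= dd y0 + (#|Y|.-1)%:R * G)%R]|)%N.
  by apply/card_gt0P; exists y; rewrite in_setC.
have h3 : (0 < #|Y|)%N by apply/card_gt0P; exists y.
lia.
Qed.

Lemma Tbound y : \sum_x mu x * ee x + dd y <= (#|Y|.-1)%:R * G.
Proof.
have hav := avg.
have e1 : dd y - \sum_y' nu y' * dd y' = \sum_y' nu y' * (dd y - dd y').
  rewrite [RHS](eq_bigr (fun y' => nu y' * dd y - nu y' * dd y')); last first.
    by move=> y' _; rewrite mulrBr.
  by rewrite sumrB -mulr_suml hsnu mul1r.
have e2 : \sum_y' nu y' * (dd y - dd y') <= (#|Y|.-1)%:R * G.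
  apply: le_trans (_ : \sum_y' nu y' * ((#|Y|.-1)%:R * G) <= _).
    apply: ler_sum => y' _; apply: ler_wpM2l; [exact: ltW (nu_pos _) | exact: osc].
  by rewrite -mulr_suml hsnu mul1r.
lra.
Qed.

Definition rho := E / ep.
Definition Km := Kmat ep c mu nu.
Definition v0 y := expR (be1 y / ep).
Definition vs l := sk_v Km mu nu v0 l.
Definition Kv (v : Y -> R) x := \sum_y Km x y * v y.
Definition ys := Order.arg_min y1 xpredT (fun y => be1 y - be2 y).
Definition ms := be1 ys - be2 ys.
Lemma ms_le y : ms <= be1 y - be2 y.
Proof. by rewrite /ms /ys; case: arg_minP => // i _ h; apply: h. Qed.
Definition w y := expR ((be2 y + ms) / ep).

Lemma rho_gt1 : 1 < rho.
Proof. by rewrite /rho ltr_pdivlMr // mul1r. Qed.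

Lemma Km_pos x y : 0 < Km x y.
Proof.
rewrite /Km /Kmat; apply: mulr_gt0; last exact: nu_pos.
apply: mulr_gt0; [exact: expR_gt0 | exact: mu_pos].
Qed.

Lemma Kw_eq x : Kv w x = mu x * expR ((ms - al2 x) / ep).
Proof.
rewrite /Kv -[RHS]mulr1 -(row2 x) mulr_sumr; apply: eq_bigr => y _.
rewrite /Km /Kmat /w /S2.
have H : expR (- c x y / ep) * expR ((be2 y + ms) / ep)
    = expR ((ms - al2 x) / ep) * expR ((al2 x + be2 y - c x y) / ep).
  rewrite -!expRD; congr expR; field; exact: epne0.
transitivity (mu x * nu y * (expR (- c x y / ep) * expR ((be2 y + ms) / ep))); first ring.
rewrite H; ring.
Qed.

Lemma Kw_pos x : 0 < Kv w x.
Proof. rewrite Kw_eq; apply: mulr_gt0; [exact: mu_pos | exact: expR_gt0]. Qed.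

Lemma Kv0_le x : Kv v0 x <= mu x * expR (- al1 x / ep + (rho - 1) * LM).
Proof.
rewrite /Kv (_ : mu x * expR (- al1 x / ep + (rho - 1) * LM) = mu x * expR (- al1 x / ep + (rho - 1) * LM) * \sum_y nu y * expR (S1 x y)); last by rewrite row1 mulr1.
rewrite mulr_sumr; apply: ler_sum => y _.
rewrite /Km /Kmat /v0.
have H : expR (- c x y / ep) * expR (be1 y / ep)
    = expR (- al1 x / ep) * expR (S1 x y) * expR ((rho - 1) * S1 x y).
  rewrite -!expRD; congr expR; rewrite /rho /S1; field.
  by rewrite Ene0 epne0.
have E1 : expR (- c x y / ep) * mu x * nu y * expR (be1 y / ep)
   = mu x * nu y * (expR (- al1 x / ep) * expR (S1 x y) * expR ((rho - 1) * S1 x y)).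
  by rewrite -H; ring.
have E2 : mu x * expR (- al1 x / ep + (rho - 1) * LM) * (nu y * expR (S1 x y))
   = mu x * nu y * (expR (- al1 x / ep) * expR (S1 x y) * expR ((rho - 1) * LM)).
  by rewrite expRD; ring.
rewrite E1 E2.
have h1 : expR ((rho - 1) * S1 x y) <= expR ((rho - 1) * LM).
  rewrite ler_expR; apply: ler_wpM2l; last exact: S1_le.
  have := rho_gt1; lra.
apply: ler_wpM2l.
  by apply: mulr_ge0; [exact: ltW (mu_pos _) | exact: ltW (nu_pos _)].
apply: ler_wpM2l => //.
by apply: mulr_ge0; exact: ltW (expR_gt0 _).
Qed.

Lemma w_le_v l y : w y <= vs l y.
Proof.
elim: l y => [|l IH] y.
  rewrite /vs /= /v0 /w ler_expR ler_pM2r ?invr_gt0 //; have := ms_le y; lra.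
have Kge : forall x, Kv w x <= Kv (vs l) x.
  move=> x; apply: ler_sum => y' _; apply: ler_wpM2l; [exact: ltW (Km_pos _ _) | exact: IH].
have Kpos : forall x, 0 < Kv (vs l) x by move=> x; exact: lt_le_trans (Kw_pos x) (Kge x).
rewrite /vs /= /sk_vstep le_min; apply/andP; split; first exact: IH.
rewrite -/(vs l).
have upos : forall x, 0 < sk_u Km mu (vs l) x.
  by move=> x; rewrite /sk_u; apply: divr_gt0; [exact: mu_pos | exact: Kpos].
have ule : forall x, sk_u Km mu (vs l) x <= expR ((al2 x - ms) / ep).
  move=> x; rewrite /sk_u -/(Kv (vs l) x).
  have -> : expR ((al2 x - ms) / ep) = mu x / Kv w x.
    rewrite Kw_eq invfM mulrA divff ?lt0r_neq0 ?mu_pos // mul1r -expRN; congr expR.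
    field; exact: epne0.
  apply: ler_wpM2l; first exact: ltW (mu_pos _).
  by rewrite lef_pV2 ?posrE ?Kpos ?Kw_pos.
set S := \sum_x Km x y * sk_u Km mu (vs l) x.
have Spos : 0 < S.
  by apply: (@sum_pos _ _ x1 (fun x => Km x y * sk_u Km mu (vs l) x)) => x; apply: mulr_gt0; [exact: Km_pos | exact: upos].
have Sle : S <= nu y / w y.
  apply: le_trans (_ : \sum_x Km x y * expR ((al2 x - ms) / ep) <= _).
    apply: ler_sum => x _; apply: ler_wpM2l; [exact: ltW (Km_pos _ _) | exact: ule].
  rewrite /w -expRN -[X in _ <= X]mulr1 -(col2 y) mulr_sumr.
  apply: ler_sum => x _; rewrite /Km /Kmat /S2.
  have H : expR (- c x y / ep) * expR ((al2 x - ms) / ep)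
     = expR (- ((be2 y + ms) / ep)) * expR ((al2 x + be2 y - c x y) / ep).
    rewrite -!expRD; congr expR; field; exact: epne0.
  rewrite le_eqVlt; apply/orP; left; apply/eqP.
  transitivity (mu x * nu y * (expR (- c x y / ep) * expR ((al2 x - ms) / ep))); first ring.
  rewrite H; ring.
have wpos : 0 < w y by exact: expR_gt0.
rewrite ler_pdivlMr //.
apply: le_trans (_ : w y * (nu y / w y) <= _).
  by apply: ler_wpM2l => //; exact: ltW.
rewrite mulrC -mulrA mulVf ?lt0r_neq0 // mulr1 //.
Qed.

Lemma Kv_pos l x : 0 < Kv (vs l) x.
Proof.
apply: lt_le_trans (Kw_pos x) _; apply: ler_sum => y _.
by apply: ler_wpM2l; [exact: ltW (Km_pos _ _) | exact: w_le_v].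
Qed.

Definition B l := \sum_x mu x * ln (Kv (vs l) x).

Lemma q_eq l : sk_q Km mu nu v0 l.+1 = \sum_x mu x * (Kv (vs l.+1) x / Kv (vs l) x).
Proof.
rewrite /sk_q; apply: eq_bigr => x _.
transitivity (sk_u Km mu (vs l) x * Kv (vs l.+1) x).
  by rewrite /Kv mulr_sumr; apply: eq_bigr => y _; rewrite mulrA.
by rewrite /sk_u -/(Kv (vs l) x); ring.
Qed.

Lemma Bstep l : 1 - sk_q Km mu nu v0 l.+1 <= B l - B l.+1.
Proof.
rewrite q_eq /B -{1}hsmu -!sumrB; apply: ler_sum => x _.
rewrite -mulrBr -[X in X - _]mulr1 -mulrBr; apply: ler_wpM2l; first exact: ltW (mu_pos _).
exact: ln_sub_ge (Kv_pos l x) (Kv_pos l.+1 x).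
Qed.

Definition qq l := sk_q Km mu nu v0 l.
Arguments qq : simpl never.

Lemma Btel n : \sum_(l < n) (1 - qq l.+1) <= B 0 - B n.
Proof.
elim: n => [|n IH]; first by rewrite big_ord0 subrr.
rewrite big_ord_recr /=; have := Bstep n; rewrite -/(qq n.+1); lra.
Qed.

Lemma Bn_ge n : \sum_x mu x * ln (Kv w x) <= B n.
Proof.
apply: ler_sum => x _; apply: ler_wpM2l; first exact: ltW (mu_pos _).
rewrite ler_ln ?posrE ?Kw_pos ?Kv_pos //.
apply: ler_sum => y _.
by apply: ler_wpM2l; [exact: ltW (Km_pos _ _) | exact: w_le_v].
Qed.

Lemma Qbound : B 0 - \sum_x mu x * ln (Kv w x)
   <= rho * ((#|Y|.-1)%:R * G) + (rho - 1) * LM.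
Proof.
have hx : forall x, ln (Kv (vs 0) x) - ln (Kv w x)
    <= (al2 x - al1 x - ms) / ep + (rho - 1) * LM.
  move=> x.
  have h1 : ln (Kv (vs 0) x) <= ln (mu x) + (- al1 x / ep + (rho - 1) * LM).
    rewrite -[X in _ <= ln (mu x) + X]expRK -lnM ?posrE ?mu_pos ?expR_gt0 //.
    by rewrite ler_ln ?posrE ?Kv_pos ?mulr_gt0 ?mu_pos ?expR_gt0 //; exact: Kv0_le.
  have h2 : ln (Kv w x) = ln (mu x) + (ms - al2 x) / ep.
    by rewrite Kw_eq lnM ?posrE ?mu_pos ?expR_gt0 // expRK.
  have -> : (al2 x - al1 x - ms) / ep = - al1 x / ep - (ms - al2 x) / ep.
    by field; exact: epne0.
  lra.
rewrite /B -sumrB.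
apply: le_trans (_ : \sum_x mu x * ((al2 x - al1 x - ms) / ep + (rho - 1) * LM) <= _).
  apply: ler_sum => x _; rewrite -mulrBr; apply: ler_wpM2l; [exact: ltW (mu_pos _) | exact: hx].
have e1 : \sum_x mu x * ((al2 x - al1 x - ms) / ep + (rho - 1) * LM)
   = rho * (\sum_x mu x * ee x + dd ys) + (rho - 1) * LM.
  have e2 : forall x, mu x * ((al2 x - al1 x - ms) / ep + (rho - 1) * LM)
      = rho * (mu x * ee x) + mu x * (rho * dd ys + (rho - 1) * LM).
    move=> x; rewrite /rho /ee /dd /ms; field; by rewrite Ene0 epne0.
  rewrite (eq_bigr _ (fun x _ => e2 x)) big_split /= -mulr_sumr -mulr_suml hsmu mul1r.
  ring.
rewrite e1.
have := Tbound ys; have := rho_gt1 => h0 h.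
have : rho * (\sum_x mu x * ee x + dd ys) <= rho * ((#|Y|.-1)%:R * G).
  by apply: ler_wpM2l => //; lra.
lra.
Qed.

Theorem main_sec (qt : R) : 0 < qt -> qt < 1 ->
  exists n : nat, (1 <= n)%N /\
    n%:R <= 2 + E / ep *
      ((N%:R * (4 * ln N%:R + 24 * ln M%:R) + ln M%:R) / (1 - qt)) /\
    qt <= sk_q (Kmat ep c mu nu) mu nu (fun y => expR (be1 y / ep)) n.
Proof.
move=> q0 q1.
have LM0 := LM_ge0; have LN0 := LN_ge0; have G0 := G_ge0; have r1 := rho_gt1.
set C0 := N%:R * G + LM.
have Qb : forall n, \sum_(l < n) (1 - qq l.+1) <= rho * C0.
  move=> n; have h1 := Btel n; have h2 := Bn_ge n; have h3 := Qbound.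
  have hY : (#|Y|.-1)%:R <= N%:R :> R.
    by rewrite ler_nat; apply: leq_trans hYN; exact: leq_pred.
  have h4 : rho * ((#|Y|.-1)%:R * G) <= rho * (N%:R * G).
    by apply: ler_wpM2l; [lra | apply: ler_wpM2r].
  rewrite /C0; lra.
have hq : 0 < 1 - qt by lra.
set Bd := rho * C0 / (1 - qt).
have C00 : 0 <= C0 by rewrite /C0; have := mulr_ge0 (ler0n R N) G0; lra.
have Bd0 : 0 <= Bd.
  rewrite /Bd; apply: divr_ge0; last lra.
  apply: mulr_ge0 => //; lra.
set n0 := (Num.truncn Bd).+1.
have hn0 : Bd < n0%:R by exact: truncnS_gt.
have hn0' : n0%:R <= Bd + 1.
  by rewrite /n0 -natr1 lerD2r truncn_le.
have C0C : C0 <= N%:R * (4 * ln N%:R + 24 * ln M%:R) + ln M%:R.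
  rewrite /C0 /G -/LM -/LN lerD2r; apply: ler_wpM2l; first by rewrite ler0n.
  lra.
case: (boolP [exists k : 'I_n0.+1, (0 < k)%N && (qt <= sk_q Km mu nu v0 k)])
   => [/existsP [k /andP [k0 hk]] | /existsPn hno].
  exists k; split => //; split => //.
  have hk1 : k%:R <= n0%:R :> R by rewrite ler_nat -ltnS.
  have : Bd <= E / ep * ((N%:R * (4 * ln N%:R + 24 * ln M%:R) + ln M%:R) / (1 - qt)).
    rewrite /Bd -/rho mulrA; apply: ler_wpM2r; first by rewrite invr_ge0; lra.
    by apply: ler_wpM2l => //; lra.
  lra.
exfalso.
have hlt : forall l : 'I_n0, 1 - qt <= 1 - qq l.+1.
  move=> l; have hl : (l.+1 < n0.+1)%N by rewrite ltnS ltn_ord.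
  have := hno (Ordinal hl); rewrite negb_and => /orP [//|]; rewrite -ltNge => h.
  have h' : qq l.+1 < qt := h.
  lra.
have hs1 : \sum_(l < n0) (1 - qt) <= \sum_(l < n0) (1 - qq l.+1).
  by apply: ler_sum => l _; exact: hlt.
move: hs1; rewrite sumr_const card_ord -mulr_natl => hs1.
have h2 := Qb n0.
have : Bd * (1 - qt) < n0%:R * (1 - qt) by rewrite ltr_pM2r.
have -> : Bd * (1 - qt) = rho * C0 by rewrite /Bd; field; lra.
lra.
Qed.

End Main.

Unset Implicit Arguments. Set Strict Implicit.

Theorem mainTheorem10 (R : realType) (X Y : finType) (N M : nat)
  (c : X -> Y -> R) (r : X -> nat) (s : Y -> nat)
  (mu : X -> R) (nu : Y -> R)
  (eps1 eps2 : R) (alpha1 : X -> R) (beta1 : Y -> R)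
  (alpha2 : X -> R) (beta2 : Y -> R) :
  (#|X| <= N)%N -> (#|Y| <= N)%N ->
  (forall x y, 0 <= c x y) ->
  (0 < M)%N ->
  (forall x, (0 < r x)%N) -> (forall y, (0 < s y)%N) ->
  (forall x, mu x = (r x)%:R / M%:R) -> (forall y, nu y = (s y)%:R / M%:R) ->
  \sum_(x : X) mu x = 1 -> \sum_(y : Y) nu y = 1 ->
  0 < eps2 -> eps2 < eps1 ->
  is_Jmaximizer eps1 c mu nu alpha1 beta1 ->
  is_Jmaximizer eps2 c mu nu alpha2 beta2 ->
  forall qt : R, 0 < qt -> qt < 1 ->
  exists n : nat, (1 <= n)%N /\
    n%:R <= 2 + eps1 / eps2 *
      ((N%:R * (4 * ln N%:R + 24 * ln M%:R) + ln M%:R) / (1 - qt)) /\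
    qt <= sk_q (Kmat eps2 c mu nu) mu nu (fun y => expR (beta1 y / eps2)) n.
Proof.
move=> hXN hYN hc hM hr hs hmuE hnuE hsmu hsnu hep hepE opt1 opt2 qt q0 q1.
have [x1 _] : exists x : X, true.
  case: (pickP (fun _ : X => true)) => [x _|h]; first by exists x.
  by move: hsmu; rewrite big_pred0 // => /esym/eqP; rewrite oner_eq0.
have [y1 _] : exists y : Y, true.
  case: (pickP (fun _ : Y => true)) => [y _|h]; first by exists y.
  by move: hsnu; rewrite big_pred0 // => /esym/eqP; rewrite oner_eq0.
by eapply main_sec; eassumption.
Qed.
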